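(* Consider binary operation $\wedge$ on $\{0,1\}$ defined by $1\wedge1=1\wedge0=0\wedge0=1$ and $0\wedge1=0$ (i.e. $a\wedge b=a^b$ with $0^0=1$). For $n\ge0$, the number of complete bracketings of the word $0\wedge0\wedge\cdots\wedge0$ with $n+1$ zeroes (i.e. full binary parenthesizations) whose value is $1$ equals the number of walks $0=y_0,y_1,\dots,y_n=2$ with steps $y_i-y_{i-1}\in\{-2,-1,1,2\}$ and $y_i\ge1$ for all $1\le i\le n$. *)

(* Defs.v *)
From HB Require Import structures.
From mathcomp Require Import all_boot all_order all_algebra.
Import GRing.Theory Num.Theory.
Set Implicit Arguments. Unset Strict Implicit. Unset Printing Implicit Defensive.

(* Full binary bracketings of the word 0 ^ 0 ^ ... ^ 0: binary trees whose
   leaves are all the letter 0. *)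
Inductive btree := Leaf | Node of btree & btree.

Fixpoint btree_eq (s t : btree) : bool :=
  match s, t with
  | Leaf, Leaf => true
  | Node a b, Node c d => btree_eq a c && btree_eq b d
  | _, _ => false
  end.

Lemma btree_eqP : Equality.axiom btree_eq.
Proof.
elim=> [|a IHa b IHb] [|c d] /=; try by constructor.
case: (IHa c) => [->|nac]; last by right; case.
case: (IHb d) => [->|nbd]; last by right; case.
by left.
Qed.
HB.instance Definition _ := hasDecEq.Build btree btree_eqP.

Fixpoint leaves (t : btree) : nat :=
  match t with Leaf => 1 | Node a b => leaves a + leaves b end.

(* a /\ b := a^b with 0^0 = 1, on {0,1} encoded as bool (true = 1):
   1^1 = 1^0 = 0^0 = 1, 0^1 = 0. *)
Definition wedge (a b : bool) : bool := a || ~~ b.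

Fixpoint bval (t : btree) : bool :=
  match t with Leaf => false | Node a b => wedge (bval a) (bval b) end.

Definition step (i : 'I_4) : int :=
  match val i with 0 => (-2)%R | 1 => (-1)%R | 2 => 1%R | _ => 2%R end.

Definition pos n (w : n.-tuple 'I_4) (k : nat) : int :=
  (\sum_(i <- take k w) step i)%R.

Definition good_walk n (w : n.-tuple 'I_4) : bool :=
  (pos w n == 2%R) && [forall i : 'I_n, (1 <= pos w i.+1)%R].

(* Main.v *)
Require Import Defs.
From mathcomp Require Import all_boot all_algebra.
From mathcomp Require Import zify ring.
Set Implicit Arguments. Unset Strict Implicit.
Import GRing.Theory Num.Theory.
Local Open Scope ring_scope.
Section Alg.
Variable R : comPzRingType.
Variables (z a : R).
Definition xx := z * a^+3 * (1 + z * a).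
Definition yy := z * a^+2.
Fixpoint GG (b : nat) : R :=
  match b with
  | 0 => 1
  | 1 => xx
  | (b1.+1 as b').+1 => xx * GG b' + yy * GG b1
  end.
Lemma GGS b : GG b.+2 = xx * GG b.+1 + yy * GG b.
Proof. by []. Qed.
Definition QQ := z^+2 * a^+4 + z * a^+3 - z * a^+2 - a + 1.
Definition SS b := z * (GG b + GG b.+1 + GG b.+3 + GG b.+4) - GG b.+2.
Lemma SSS b : SS b.+2 = xx * SS b.+1 + yy * SS b.
Proof. rewrite /SS !GGS. ring. Qed.
Lemma SSm1 : z * (GG 0 + GG 2 + GG 3) - GG 1 =
  (z + z*a + z*a^+2 + 2%:R*z^+2*a^+2 + 2%:R*z^+2*a^+3 + z^+2*a^+4 + z^+3*a^+4 + 2%:R*z^+3*a^+5 + z^+3*a^+6 + z^+4*a^+6 + 2%:R*z^+4*a^+7 + z^+5*a^+8) * QQ.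
Proof. rewrite /QQ /= /xx /yy. ring. Qed.
Lemma SS0 : SS 0 =
  (z + z*a + z^+2*a^+2 + 2%:R*z^+2*a^+3 + z^+2*a^+4 + z^+2*a^+5 + 2%:R*z^+3*a^+4 + 4%:R*z^+3*a^+5 + 3%:R*z^+3*a^+6 + z^+3*a^+7 + 3%:R*z^+4*a^+6 + 3%:R*z^+4*a^+7 + 3%:R*z^+4*a^+8 + z^+4*a^+9 + z^+5*a^+8 + 3%:R*z^+5*a^+9 + 3%:R*z^+5*a^+10 + z^+6*a^+10 + 3%:R*z^+6*a^+11 + z^+7*a^+12) * QQ.
Proof. rewrite /SS /QQ /= /xx /yy. ring. Qed.
Lemma G2E (c : R) : GG 2 - (c - a) =
  (a + z*a^+2 + z*a^+3 + z^+2*a^+4) * QQ - (c - a^+2 - z * a^+3).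
Proof. rewrite /QQ /= /xx /yy. ring. Qed.
Lemma eE (c : R) : c - a^+2 - z * a^+3 =
  a * (c - 1 - z * (c * c)) - (a + c) * (a - 1 - z * (a * (c - a))).
Proof. ring. Qed.
Lemma QE (c : R) : QQ = - (a - 1 - z * (a * (c - a))) - z * a * (c - a^+2 - z * a^+3).
Proof. rewrite /QQ. ring. Qed.
End Alg.
Section Trunc.
Variable N : nat.
Definition nullN (p : {poly int}) := forall k, (k <= N)%N -> p`_k = 0.
Lemma nullND p q : nullN p -> nullN q -> nullN (p + q).
Proof. by move=> hp hq k hk; rewrite coefD hp ?hq ?addr0. Qed.
Lemma nullNN p : nullN p -> nullN (- p).
Proof. by move=> hp k hk; rewrite coefN hp ?oppr0. Qed.
Lemma nullNB p q : nullN p -> nullN q -> nullN (p - q).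
Proof. by move=> hp hq; apply: nullND => //; apply: nullNN. Qed.
Lemma nullNM q p : nullN p -> nullN (q * p).
Proof.
move=> hp k hk; rewrite coefM big1 // => j _; rewrite hp ?mulr0 //.
exact: leq_trans (leq_subr _ _) hk.
Qed.
Lemma nullNeq p q : p = q -> nullN p -> nullN q.
Proof. by move=> ->. Qed.
End Trunc.

Fixpoint D (n b : nat) : nat :=
  match n with
  | 0 => (b == 0)%N
  | n'.+1 => if b is b'.+1 then
       ((if b' is b''.+1 then D n' b'' else 0) + D n' b' + D n' b'.+2 + D n' b'.+3)%N
     else 0%N
  end.

Section Main.
Variable N : nat.
Variable a : {poly int}.
Hypothesis hQ : nullN N (QQ 'X a).
Notation G := (GG 'X a).

Lemma SS1 : SS 'X a 1 = xx 'X a * SS 'X a 0 +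
   yy 'X a * ('X * (G 0 + G 2 + G 3) - G 1).
Proof. rewrite /SS !GGS /=. ring. Qed.

Lemma nullSS b : nullN N (SS 'X a b) /\ nullN N (SS 'X a b.+1).
Proof.
have h0 : nullN N (SS 'X a 0) by rewrite SS0; apply: nullNM.
have hm : nullN N ('X * (G 0 + G 2 + G 3) - G 1) by rewrite SSm1; apply: nullNM.
elim: b => [|b [IH1 IH2]].
  by split=> //; rewrite SS1; apply: nullND; apply: nullNM.
by split=> //; rewrite SSS; apply: nullND; apply: nullNM.
Qed.

Lemma G0coef b : (G b.+1)`_0 = 0.
Proof.
have hx : (xx 'X a)`_0 = 0 by rewrite /xx -mulrA coef0M coefX mul0r.
have hy : (yy 'X a)`_0 = 0 by rewrite /yy coef0M coefX mul0r.
suff : (G b.+1)`_0 = 0 /\ (G b.+2)`_0 = 0 by case.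
elim: b => [|b [IH1 IH2]].
  split; first exact: hx.
  by rewrite GGS coefD (coef0M (xx _ _)) (coef0M (yy _ _)) hx hy !mul0r addr0.
split=> //.
by rewrite GGS coefD (coef0M (xx _ _)) (coef0M (yy _ _)) hx hy !mul0r addr0.
Qed.

Lemma DG n b : (n <= N)%N -> (D n b)%:Z = (G b)`_n.
Proof.
elim: n b => [|n IH] b hn.
  case: b => [|b] /=; first by rewrite coef1.
  by rewrite G0coef.
case: b => [|b']; first by rewrite /= coef1.
rewrite [LHS]/=.
have hn' : (n <= N)%N by apply: ltnW.
set P := (if b' is b''.+1 then G b'' else 0) + G b' + G b'.+2 + G b'.+3.
have eP : (G b'.+1)`_n.+1 = ('X * P)`_n.+1.
  apply/eqP; rewrite -subr_eq0 -coefB; apply/eqP.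
  case: b' @P => [|b''] P.
    have := nullSS 0 => -[_ _].
    have hm : nullN N ('X * (G 0 + G 2 + G 3) - G 1) by rewrite SSm1; apply: nullNM.
    have -> : G 1 - 'X * P = - ('X * (G 0 + G 2 + G 3) - G 1) by rewrite /P; ring.
    by rewrite coefN hm // oppr0.
  have [h1 _] := nullSS b''.
  have -> : G b''.+2 - 'X * P = - SS 'X a b'' by rewrite /SS /P; ring.
  by rewrite coefN h1 // oppr0.
rewrite eP.
have -> : ('X * P)`_n.+1 = P`_n by rewrite coefXM.
rewrite {eP}/P; case: b' => [|b''].
  by rewrite (coefD _ (G 3)) (coefD _ (G 2)) (coefD _ (G 0)) coef0 add0r -!IH // !PoszD.
by rewrite (coefD _ (G b''.+4)) (coefD _ (G b''.+3)) (coefD _ (G b''.+1)) -!IH // !PoszD.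
Qed.
End Main.

Local Close Scope ring_scope.
Fixpoint atf (f k : nat) : seq btree :=
  match f with
  | 0 => [::]
  | f'.+1 => if k == 1 then [:: Leaf] else
     flatten [seq [seq Node l r | l <- atf f' i, r <- atf f' (k - i)] | i <- iota 1 k.-1]
  end.

Lemma leaves_gt0 t : 0 < leaves t.
Proof. elim: t => //= l IHl r IHr; lia. Qed.

Lemma atf_sound f k t : t \in atf f k -> leaves t = k.
Proof.
elim: f k t => [|f IH] k t //=.
case: eqP => [-> |hk]; first by rewrite inE => /eqP ->.
case/flatten_mapP => i; rewrite mem_iota => hi /allpairsP [[l r] [/= hl hr ->]] /=.
rewrite (IH _ _ hl) (IH _ _ hr); lia.
Qed.

Lemma atf_mem f k t : k <= f -> (t \in atf f k) = (leaves t == k).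
Proof.
move=> hk; apply/idP/eqP; first exact: atf_sound.
elim: f k t hk => [|f IH] k t hk ht.
  by have := leaves_gt0 t; lia.
rewrite /=; case: eqP => [e|ne].
  case: t ht => [|l r] /=; first by rewrite inE.
  have := leaves_gt0 l; have := leaves_gt0 r; lia.
case: t ht => [|l r] /= ht; first by lia.
apply/flatten_mapP; exists (leaves l).
  rewrite mem_iota; have := leaves_gt0 l; have := leaves_gt0 r; lia.
apply: allpairs_f; apply: IH => //; have := leaves_gt0 l; have := leaves_gt0 r; lia.
Qed.

Lemma uniq_flatten_key (S T : eqType) (key : T -> S) (s : seq S) (h : S -> seq T) :
  uniq s -> (forall x, uniq (h x)) -> (forall x y, y \in h x -> key y = x) ->
  uniq (flatten [seq h x | x <- s]).
Proof.
move=> us uh hk; elim: s us => //= x s IH /andP[xs us].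
rewrite cat_uniq uh IH // andbT /=.
apply/hasPn => y /flatten_mapP [x' x's yh']; apply/negP => yhx.
by move: xs; rewrite -(hk _ _ yhx) (hk _ _ yh') x's.
Qed.

Lemma atf_uniq f k : uniq (atf f k).
Proof.
elim: f k => [|f IH] k //=; case: eqP => // _.
apply: (@uniq_flatten_key _ _ (fun t => if t is Node l _ then leaves l else 0)).
- exact: iota_uniq.
- move=> i; apply: allpairs_uniq => //.
  by move=> [l r] [l' r'] _ _ /= [-> ->].
- by move=> i y /allpairsP [[l r] [/= hl hr ->]]; apply: atf_sound hl.
Qed.

Lemma cnt_atf (P : pred btree) f k : k <= f -> count P (atf f k) = count P (atf k k).
Proof.
move=> hk; apply/permP; apply: uniq_perm; try exact: atf_uniq.
by move=> t; rewrite !atf_mem.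
Qed.

Lemma size_atf f k : k <= f -> size (atf f k) = size (atf k k).
Proof.
move=> hk; apply: perm_size; apply: uniq_perm; try exact: atf_uniq.
by move=> t; rewrite !atf_mem.
Qed.

Definition ta n := count (fun t => ~~ bval t) (atf n.+1 n.+1).
Definition tb n := count bval (atf n.+1 n.+1).
Definition tc n := size (atf n.+1 n.+1).

Lemma tcE n : tc n = ta n + tb n.
Proof. by rewrite /tc /ta /tb addnC -(count_predC bval). Qed.

Lemma count_node0 L R :
  count (fun t => ~~ bval t) [seq Node l r | l <- L, r <- R] =
  count (fun t => ~~ bval t) L * count bval R.
Proof.
elim: L => //= l L IH; rewrite count_cat IH count_map /=.
case hl: (bval l) => /=.
  rewrite (@eq_count _ _ pred0) ?count_pred0 ?add0n // => r /=.
  by rewrite /wedge hl.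
rewrite (@eq_count _ _ bval) ?mulSn // => r /=.
by rewrite /wedge hl /= negbK.
Qed.

Lemma sumn_iota F k m : sumn [seq F i | i <- iota k m] = \sum_(j < m) F (k + j).
Proof.
elim: m k => [|m IH] k; first by rewrite big_ord0.
by rewrite /= big_ord_recl IH addn0; congr (_ + _); apply: eq_bigr => j _; rewrite addSnnS.
Qed.

Lemma ta0 : ta 0 = 1. Proof. by []. Qed.
Lemma tc0 : tc 0 = 1. Proof. by []. Qed.

Lemma atfS f k : k != 1 -> atf f.+1 k =
  flatten [seq [seq Node l r | l <- atf f i, r <- atf f (k - i)] | i <- iota 1 k.-1].
Proof. by move=> h; rewrite /= (negbTE h). Qed.

Lemma taS n : ta n.+1 = \sum_(j < n.+1) ta j * tb (n - j).
Proof.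
rewrite /ta atfS // count_flatten -map_comp sumn_iota.
apply: eq_bigr => j _; rewrite count_node0.
have hj := ltn_ord j.
rewrite (_ : (n.+2 - (1 + j)) = (n - j).+1); last by lia.
rewrite (@cnt_atf _ n.+1 (1 + j)); last by lia.
rewrite (@cnt_atf _ n.+1 (n - j).+1) //; lia.
Qed.

Lemma tcS n : tc n.+1 = \sum_(j < n.+1) tc j * tc (n - j).
Proof.
rewrite /tc atfS // size_flatten /shape -map_comp sumn_iota.
apply: eq_bigr => j _; rewrite size_allpairs.
have hj := ltn_ord j.
rewrite (_ : (n.+2 - (1 + j)) = (n - j).+1); last by lia.
rewrite (@size_atf n.+1 (1 + j)); last by lia.
rewrite (@size_atf n.+1 (n - j).+1) //; lia.
Qed.

Section Split.
Variable T : finType.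
Variable n : nat.
Definition trc (p : T * n.-tuple T) : n.+1.-tuple T := [tuple of rcons p.2 p.1].
Definition tsplit (w : n.+1.-tuple T) : T * n.-tuple T :=
  (last (thead w) (behead w), [tuple of belast (thead w) (behead w)]).
Lemma trcK : cancel trc tsplit.
Proof.
move=> [s w]; rewrite /tsplit /trc.
have e := congr1 val (tuple_eta [tuple of rcons w s]).
move: e; rewrite [in RHS]/= => e; symmetry in e; move: e; rewrite lastI => /rcons_inj [e1 e2].
by congr pair => //; apply: val_inj; rewrite /= e1.
Qed.
Lemma tsplitK : cancel tsplit trc.
Proof.
move=> w; apply: val_inj; rewrite /trc /tsplit /= -lastI.
exact: (esym (congr1 val (tuple_eta w))).
Qed.

Lemma card_rcons (P : pred (n.+1.-tuple T)) :
  #|[set w | P w]| = (\sum_(s : T) #|[set w : n.-tuple T | P (trc (s, w))]|)%N.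
Proof.
rewrite -sum1_card (reindex trc); last by exists tsplit => x _; [apply: trcK | apply: tsplitK].
rewrite (eq_bigr (fun s => \sum_(w | P (trc (s, w))) 1)%N); last first.
  by move=> s _; rewrite -sum1_card; apply: eq_bigl => w; rewrite inE.
rewrite pair_big_dep; apply: eq_bigl => -[s w] /=.
by rewrite inE.
Qed.
End Split.

Definition Dz n (h : int) : nat := if h is Posz b then D n b else 0.

Local Open Scope ring_scope.

Lemma pos_rcons n (w : n.-tuple 'I_4) s k : (k <= n)%N ->
  pos (trc (s, w)) k = pos w k.
Proof.
move=> hk; rewrite /pos /trc /= -cats1 takel_cat //.
by rewrite size_tuple.
Qed.

Lemma pos_rcons_last n (w : n.-tuple 'I_4) s :
  pos (trc (s, w)) n.+1 = pos w n + step s.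
Proof.
rewrite /pos /trc /= take_oversize ?size_rcons ?size_tuple //.
rewrite take_oversize ?size_tuple //.
by rewrite -cats1 big_cat big_seq1.
Qed.

Lemma forall_recr n (Q : nat -> bool) :
  [forall i : 'I_n.+1, Q i.+1] = [forall i : 'I_n, Q i.+1] && Q n.+1.
Proof.
apply/forallP/andP => [H|[/forallP H1 H2] i].
  split; last exact: (H ord_max).
  by apply/forallP => i; exact: (H (widen_ord (leqnSn n) i)).
case: (unliftP ord_max i) => [j ->|->] //.
have := H1 j; congr (Q _.+1).
by rewrite /= /bump leqNgt ltn_ord.
Qed.

Definition WS n (h : int) :=
  [set w : n.-tuple 'I_4 | (pos w n == h) && [forall i : 'I_n, 1 <= pos w i.+1]].

Lemma stepcard n h s :
  #|[set w : n.-tuple 'I_4 | (pos (trc (s, w)) n.+1 == h) &&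
      [forall i : 'I_n.+1, 1 <= pos (trc (s, w)) i.+1]]| =
  if 1 <= h then #|WS n (h - step s)| else 0%N.
Proof.
have E : forall w : n.-tuple 'I_4, ((pos (trc (s, w)) n.+1 == h) &&
      [forall i : 'I_n.+1, 1 <= pos (trc (s, w)) i.+1]) =
   [&& 1 <= h, pos w n == h - step s & [forall i : 'I_n, 1 <= pos w i.+1]].
  move=> w; rewrite (@forall_recr n (fun k => 1 <= pos (trc (s, w)) k)) /= pos_rcons_last.
  have -> : [forall i : 'I_n, 1 <= pos (trc (s, w)) i.+1] =
            [forall i : 'I_n, 1 <= pos w i.+1].
    by apply: eq_forallb => i; rewrite pos_rcons.
  case e: (pos w n + step s == h).
    move/eqP: e => <-; rewrite addrK eqxx /=.
    by case: (1 <= _); rewrite ?andbT ?andbF.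
  have -> : (pos w n == h - step s) = false.
    by apply/negbTE; apply: contraFN e => /eqP ->; rewrite subrK.
  by rewrite andbF.
case: ifP => h1.
  by apply: eq_card => w; rewrite !inE E h1.
apply/eqP; rewrite cards_eq0; apply/eqP/setP => w.
by rewrite !inE E h1.
Qed.

Lemma card_walk n h : #|WS n h| = Dz n h.
Proof.
elim: n h => [|n IH] h.
  rewrite /WS; case: (eqVneq h 0) => [->|hne].
    rewrite (_ : [set w | _] = setT); last first.
      apply/setP => w; rewrite !inE /pos take0 big_nil eqxx /=.
      by apply/forallP => -[].
    by rewrite cardsT card_tuple.
  rewrite (_ : [set w | _] = set0); last first.
    apply/setP => w; rewrite !inE /pos take0 big_nil.
    by rewrite eq_sym (negbTE hne).
  rewrite cards0; case: h hne => [[|b]|b] //.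
rewrite /WS card_rcons.
rewrite (eq_bigr (fun s => if 1 <= h then #|WS n (h - step s)| else 0%N)); last first.
  by move=> s _; rewrite stepcard.
rewrite !big_ord_recl big_ord0 !IH.
case: h => [[|b]|b] //.
rewrite (_ : Posz b.+1 - step ord0 = Posz b.+3); last by rewrite /step /=; lia.
rewrite (_ : Posz b.+1 - step (lift ord0 ord0) = Posz b.+2); last by rewrite /step /=; lia.
rewrite (_ : Posz b.+1 - step (lift ord0 (lift ord0 ord0)) = Posz b); last by rewrite /step /=; lia.
case: b => [|b].
  rewrite (_ : Posz 1 - step (lift ord0 (lift ord0 (lift ord0 ord0))) = Negz 0); last by rewrite /step /=; lia.
  rewrite /= ; lia.
rewrite (_ : Posz b.+2 - step (lift ord0 (lift ord0 (lift ord0 ord0))) = Posz b); last by rewrite /step /=; lia.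
rewrite /=; lia.
Qed.

Section Final.
Variable n : nat.
Definition pa : {poly int} := \poly_(i < n.+1) (ta i)%:Z.
Definition pb : {poly int} := \poly_(i < n.+1) (tb i)%:Z.
Definition pc : {poly int} := pa + pb.

Lemma pa_coef k : (k <= n)%N -> pa`_k = (ta k)%:Z.
Proof. by move=> hk; rewrite coef_poly ltnS hk. Qed.
Lemma pb_coef k : (k <= n)%N -> pb`_k = (tb k)%:Z.
Proof. by move=> hk; rewrite coef_poly ltnS hk. Qed.
Lemma pc_coef k : (k <= n)%N -> pc`_k = (tc k)%:Z.
Proof. by move=> hk; rewrite coefD pa_coef // pb_coef // tcE PoszD. Qed.

Lemma r2null : nullN n (pa - 1 - 'X * (pa * (pc - pa))).
Proof.
have -> : pc - pa = pb by rewrite /pc; ring.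
move=> [|k] hk; rewrite !coefB coefXM coef1 pa_coef //=.
rewrite coefM taS (big_morph Posz PoszD (erefl _)) subr0.
rewrite (eq_bigr (fun j : 'I_k.+1 => pa`_j * pb`_(k - j))) ?subrr //.
move=> j _; rewrite pa_coef ?pb_coef ?PoszM //.
  by apply: leq_trans (leq_subr _ _) _; apply: ltnW.
by have := ltn_ord j; lia.
Qed.

Lemma r1null : nullN n (pc - 1 - 'X * (pc * pc)).
Proof.
move=> [|k] hk; rewrite !coefB coefXM coef1 pc_coef //=.
rewrite coefM tcS (big_morph Posz PoszD (erefl _)) subr0.
rewrite (eq_bigr (fun j : 'I_k.+1 => pc`_j * pc`_(k - j))) ?subrr //.
move=> j _; rewrite pc_coef ?pc_coef ?PoszM //.
  by apply: leq_trans (leq_subr _ _) _; apply: ltnW.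
by have := ltn_ord j; lia.
Qed.

Lemma enull : nullN n (pc - pa^+2 - 'X * pa^+3).
Proof.
rewrite eE; apply: nullNB; apply: nullNM; [exact: r1null | exact: r2null].
Qed.

Lemma Qnull : nullN n (QQ 'X pa).
Proof.
rewrite (QE _ _ pc); apply: nullNB; first exact/nullNN/r2null.
exact/nullNM/enull.
Qed.

Lemma Dn2 : D n 2 = tb n.
Proof.
apply/eqP; rewrite -eqz_nat; apply/eqP.
rewrite (DG Qnull) //.
have h := G2E 'X pa pc.
have hn : ((GG 'X pa 2 - (pc - pa))`_n = 0).
  rewrite h; apply: (nullNB (nullNM _ Qnull) enull); exact: leqnn.
move/eqP: hn; rewrite coefB subr_eq0 => /eqP ->.
by rewrite coefB pc_coef // pa_coef // tcE PoszD addrC addKr.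
Qed.
End Final.

Theorem proposition5p4 (n : nat) :
  exists s : seq btree,
    [/\ uniq s,
        (forall t, t \in s <-> (leaves t = n.+1 /\ bval t = true)) &
        size s = #|[set w : n.-tuple 'I_4 | good_walk w]| ].
Proof.
exists (filter bval (atf n.+1 n.+1)); split.
- exact/filter_uniq/atf_uniq.
- move=> t; rewrite mem_filter atf_mem //; split.
    by case/andP => -> /eqP.
  by case=> -> ->; rewrite eqxx.
- rewrite size_filter (_ : [set w | good_walk w] = WS n 2); last first.
    by apply/setP => w; rewrite !inE.
  by rewrite card_walk /= Dn2.
Qed.
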